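(* If the designer's preferences $(A_1,A_0,B_1,B_0)$ have at most one nonzero entry, i.e. are of one of the forms $(A_1,0,0,0)$, $(0,A_0,0,0)$, $(0,0,B_1,0)$, $(0,0,0,B_0)$, then a null equilibrium exists.
   Context: A unit mass of individuals has costs $\gamma_i\in\mathbb{R}$ of compliance ($\beta_i=1$) distributed according to a continuously differentiable CDF $F$ with log-concave density $f$ of full support on $\mathbb{R}$. A classifier $\delta=(\delta_1,\delta_0)\in[0,1]^2$ assigns $d_i$ with $\Pr[d_i=s_i\mid s_i]=\delta_{s_i}$ where $\Pr[s_i=\beta_i]=\phi\in(\tfrac12,1]$; individuals with $d_i=1$ receive reward $r\in\mathbb{R}$. Let $\rho(\delta)=(\delta_1+\delta_0-1)(2\phi-1)$; $\delta$ is null iff $\rho=0$. Individuals comply iff $\gamma_i\le r\rho$; compliance rate $\pi=F(r\rho)$. Designer payoffs $(A_1,A_0,B_1,B_0)\in\mathbb{R}_+^4$ ($A_1$: complier with $d_i=1$; $A_0$: complier with $d_i=0$; $B_1$: non-complier with $d_i=0$; $B_0$: non-complier with $d_i=1$), expected payoff $EU_D(\delta\mid r)=\pi[\phi(A_1\delta_1+A_0(1-\delta_1))+(1-\phi)(A_0\delta_0+A_1(1-\delta_0))]+(1-\pi)[\phi(B_1\delta_0+B_0(1-\delta_0))+(1-\phi)(B_0\delta_1+B_1(1-\delta_1))]$. Rewards are budget balanced and each individual also gets $t\pi$, $t\ge0$; individual $i$'s payoff from $r$ given $\delta$ is $U_i(r)=-\gamma_i+r\rho(1-F(r\rho))+tF(r\rho)$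 if $\gamma_i\le r\rho$, else $-r\rho F(r\rho)+tF(r\rho)$. The median individual has cost $\gamma_\mu$ with $F(\gamma_\mu)=\tfrac12$. An equilibrium is a pair $(r^*,\delta^* )$ such that $r^*$ maximizes $U_\mu(r)$ given $\delta^*$ and $\delta^*$ maximizes $EU_D(\delta\mid r^* )$ over $[0,1]^2$; a null equilibrium is one with $r^*=0$ and/or $\delta^*$ null. *)

(* Defs.v *)
From Stdlib Require Import Reals.
From Coquelicot Require Import Coquelicot.
Open Scope R_scope.

Definition is_cdf (F : R -> R) : Prop :=
  (forall x y, x <= y -> F x <= F y) /\
  is_lim F m_infty 0 /\ is_lim F p_infty 1.

Definition log_concave (f : R -> R) : Prop :=
  forall x y l, 0 <= l <= 1 ->
    l * ln (f x) + (1 - l) * ln (f y) <= ln (f (l * x + (1 - l) * y)).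

Definition admissible_cost_dist (F f : R -> R) : Prop :=
  is_cdf F /\
  (forall x, derivable_pt_lim F x (f x)) /\
  (forall x, continuity_pt f x) /\
  (forall x, 0 < f x) /\
  log_concave f.

Definition rho (phi d1 d0 : R) : R := (d1 + d0 - 1) * (2 * phi - 1).

Definition is_null (phi d1 d0 : R) : Prop := rho phi d1 d0 = 0.

Definition EU_D (F : R -> R) (phi A1 A0 B1 B0 r d1 d0 : R) : R :=
  let pi := F (r * rho phi d1 d0) in
  pi * (phi * (A1 * d1 + A0 * (1 - d1)) + (1 - phi) * (A0 * d0 + A1 * (1 - d0)))
  + (1 - pi) * (phi * (B1 * d0 + B0 * (1 - d0)) + (1 - phi) * (B0 * d1 + B1 * (1 - d1))).

Definition U_ind (F : R -> R) (phi t gamma d1 d0 r : R) : R :=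
  let x := r * rho phi d1 d0 in
  if Rle_dec gamma x then - gamma + x * (1 - F x) + t * F x
  else - x * F x + t * F x.

Definition in01 (x : R) : Prop := 0 <= x <= 1.

(* (r_star, delta_star) is an equilibrium when gmu is the median cost *)
Definition equilibrium (F : R -> R) (phi t gmu A1 A0 B1 B0 r d1 d0 : R) : Prop :=
  in01 d1 /\ in01 d0 /\
  (forall r', U_ind F phi t gmu d1 d0 r' <= U_ind F phi t gmu d1 d0 r) /\
  (forall e1 e0, in01 e1 -> in01 e0 ->
     EU_D F phi A1 A0 B1 B0 r e1 e0 <= EU_D F phi A1 A0 B1 B0 r d1 d0).

Definition null_equilibrium (F : R -> R) (phi t gmu A1 A0 B1 B0 r d1 d0 : R) : Prop :=
  equilibrium F phi t gmu A1 A0 B1 B0 r d1 d0 /\ (r = 0 \/ is_null phi d1 d0).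

Definition single_entry (A1 A0 B1 B0 : R) : Prop :=
  (A0 = 0 /\ B1 = 0 /\ B0 = 0) \/
  (A1 = 0 /\ B1 = 0 /\ B0 = 0) \/
  (A1 = 0 /\ A0 = 0 /\ B0 = 0) \/
  (A1 = 0 /\ A0 = 0 /\ B1 = 0).

(* Main.v *)
Require Import Defs.
From Stdlib Require Import Reals Lra.
From Coquelicot Require Import Coquelicot.
Open Scope R_scope.

Lemma F01 (F f : R -> R) x : admissible_cost_dist F f -> 0 <= F x <= 1.
Proof.
  intros [[Hm [H0 H1]] _]. split.
  - assert (H := is_lim_le_loc F (fun _ => F x) m_infty 0 (F x)).
    simpl in H. apply H; auto.
    + exists x. intros y Hy. apply Hm. lra.
    + apply is_lim_const.
  - assert (H := is_lim_le_loc (fun _ => F x) F p_infty (F x) 1).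
    simpl in H. apply H; auto.
    + exists x. intros y Hy. apply Hm. lra.
    + apply is_lim_const.
Qed.

Theorem corollary3 (F f : R -> R) (phi t gmu A1 A0 B1 B0 : R) :
  admissible_cost_dist F f ->
  1 / 2 < phi <= 1 ->
  0 <= t ->
  F gmu = 1 / 2 ->
  0 <= A1 -> 0 <= A0 -> 0 <= B1 -> 0 <= B0 ->
  single_entry A1 A0 B1 B0 ->
  exists r d1 d0, null_equilibrium F phi t gmu A1 A0 B1 B0 r d1 d0.
Proof.
  intros Hadm Hphi Ht Hmed HA1 HA0 HB1 HB0 Hs.
  pose proof (F01 F f 0 Hadm) as Hp.
  assert (Hu : forall d1 d0 r', d1 + d0 = 1 ->
     U_ind F phi t gmu d1 d0 r' = U_ind F phi t gmu d1 d0 0).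
  { intros d1 d0 r' E. unfold U_ind, rho.
    replace (d1 + d0 - 1) with 0 by lra.
    cbv zeta. rewrite Rmult_0_l, !Rmult_0_r. reflexivity. }
  assert (HE : forall e1 e0, EU_D F phi A1 A0 B1 B0 0 e1 e0 =
     F 0 * (phi * (A1 * e1 + A0 * (1 - e1)) + (1 - phi) * (A0 * e0 + A1 * (1 - e0)))
  + (1 - F 0) * (phi * (B1 * e0 + B0 * (1 - e0)) + (1 - phi) * (B0 * e1 + B1 * (1 - e1)))).
  { intros. unfold EU_D. cbv zeta. rewrite Rmult_0_l. reflexivity. }
  exists 0.
  destruct Hs as [[? [? ?]]|[[? [? ?]]|[[? [? ?]]|[? [? ?]]]]]; subst.
  - exists 1, 0. split; [|left; reflexivity].
    split; [unfold in01; lra|split; [unfold in01; lra|split]].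
    + intros r'. rewrite (Hu 1 0 r') by lra. lra.
    + intros e1 e0 [] []. rewrite !HE.
      assert (K : 0 <= A1*(phi*(1-e1)+(1-phi)*e0)) by (apply Rmult_le_pos; nra).
      assert (0 <= F 0 * (A1*(phi*(1-e1)+(1-phi)*e0))) by (apply Rmult_le_pos; lra).
      nra.
  - exists 0, 1. split; [|left; reflexivity].
    split; [unfold in01; lra|split; [unfold in01; lra|split]].
    + intros r'. rewrite (Hu 0 1 r') by lra. lra.
    + intros e1 e0 [] []. rewrite !HE.
      assert (K : 0 <= A0*(phi*e1+(1-phi)*(1-e0))) by (apply Rmult_le_pos; nra).
      assert (0 <= F 0 * (A0*(phi*e1+(1-phi)*(1-e0)))) by (apply Rmult_le_pos; lra).
      nra.
  - exists 0, 1. split; [|left; reflexivity].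
    split; [unfold in01; lra|split; [unfold in01; lra|split]].
    + intros r'. rewrite (Hu 0 1 r') by lra. lra.
    + intros e1 e0 [] []. rewrite !HE.
      assert (K : 0 <= B1*(phi*(1-e0)+(1-phi)*e1)) by (apply Rmult_le_pos; nra).
      assert (0 <= (1 - F 0) * (B1*(phi*(1-e0)+(1-phi)*e1))) by (apply Rmult_le_pos; lra).
      nra.
  - exists 1, 0. split; [|left; reflexivity].
    split; [unfold in01; lra|split; [unfold in01; lra|split]].
    + intros r'. rewrite (Hu 1 0 r') by lra. lra.
    + intros e1 e0 [] []. rewrite !HE.
      assert (K : 0 <= B0*(phi*e0+(1-phi)*(1-e1))) by (apply Rmult_le_pos; nra).
      assert (0 <= (1 - F 0) * (B0*(phi*e0+(1-phi)*(1-e1)))) by (apply Rmult_le_pos; lra).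
      nra.
Qed.
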